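(* Let $\mathbb{K}$ be a field of characteristic zero and let $\mathcal{D}=\{\Delta^{p(1)}_{\beta(1)},\ldots,\Delta^{p(k)}_{\beta(k)}\}$ be a finite set of derivations of $\mathbb{K}[x_1,\ldots,x_n]$ of the form $\Delta^{p}_{\beta}=x_1^{p_1}\cdots x_n^{p_n}\sum_{j=1}^n\beta_jx_j\partial_j$ with $p(i)\in\mathbb{Z}^n_{\ge 0}$ and $\beta(i)\in\mathbb{K}^n\setminus\{0\}$, all of positive weight, i.e. $p(i)\neq 0$ for all $i$. Then the Lie algebra $\mathfrak{g}(\mathcal{D})$ generated by $\mathcal{D}$ is finite dimensional if and only if the elements of $\mathcal{D}$ can be renumbered in such a way that the following two conditions hold: 1) if $\beta(i)$ and $\beta(j)$ are proportional, then $\langle\beta(i),p(i)-p(j)\rangle=0$; 2) if $\beta(i)$ and $\beta(j)$ are not proportional and $j>i$, then $\langle\beta(j),p(i)\rangle=0$ and there exists $r_{ij}\in\mathbb{Z}_{\ge 0}$ such that $\langle\beta(i),p(j)+r_{ij}p(i)\rangle=0$.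
   Context: $\partial_i=\partial/\partial x_i$. For $\beta\in\mathbb{K}^n$ and $u\in\mathbb{Z}^n$, $\langle\beta,u\rangle:=\sum_{i=1}^n\beta_iu_i$. The weight of $\Delta^p_\beta$ is $\sum_j p_j$. The Lie bracket is the commutator of derivations, $[D_1,D_2]=D_1\circ D_2-D_2\circ D_1$, and $\mathfrak{g}(\mathcal{D})$ is the smallest Lie subalgebra of the Lie algebra of derivations of $\mathbb{K}[x_1,\ldots,x_n]$ containing $\mathcal{D}$. *)

(* Defs.v *)
From HB Require Import structures.
From mathcomp Require Import all_boot all_order all_algebra.
From mathcomp Require Import multinomials.mpoly.
Set Implicit Arguments. Unset Strict Implicit. Unset Printing Implicit Defensive.
Import Order.TTheory GRing.Theory.
Local Open Scope ring_scope.

Definition der (K : fieldType) (n : nat) := {mpoly K[n]} -> {mpoly K[n]}.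

Definition lie_bracket (K : fieldType) (n : nat) (D1 D2 : der K n) : der K n :=
  fun f => D1 (D2 f) - D2 (D1 f).

Definition Delta (K : fieldType) (n : nat) (p : 'I_n -> nat) (beta : 'I_n -> K)
  : der K n :=
  fun f => 'X_[[multinom p j | j < n]] *
           \sum_(j < n) (beta j *: ('X_j * mderiv j f)).

Inductive lie_gen (K : fieldType) (n k : nat) (D : 'I_k -> der K n) : der K n -> Prop :=
  | lg_base i : lie_gen D (D i)
  | lg_zero : lie_gen D (fun _ => 0)
  | lg_add d1 d2 : lie_gen D d1 -> lie_gen D d2 -> lie_gen D (fun f => d1 f + d2 f)
  | lg_scale (c : K) d : lie_gen D d -> lie_gen D (fun f => c *: d f)
  | lg_bracket d1 d2 : lie_gen D d1 -> lie_gen D d2 -> lie_gen D (lie_bracket d1 d2).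

Definition fin_dim (K : fieldType) (n : nat) (S : der K n -> Prop) : Prop :=
  exists s : seq (der K n),
    forall d, S d -> exists c : 'I_(size s) -> K,
      forall f, d f = \sum_(i < size s) c i *: (nth (fun _ => 0) s i) f.

Definition pairing (K : fieldType) (n : nat) (beta : 'I_n -> K) (u : 'I_n -> int) : K :=
  \sum_(l < n) beta l * (u l)%:~R.

Definition proportional (K : fieldType) (n : nat) (b1 b2 : 'I_n -> K) : Prop :=
  exists c : K, forall l, b1 l = c * b2 l.

(* Main.v *)
Require Import Defs.
From HB Require Import structures.
From mathcomp Require Import all_boot all_order all_algebra all_fingroup.
From mathcomp Require Import multinomials.mpoly.
Import Order.TTheory GRing.Theory.
Local Open Scope ring_scope.
From Stdlib Require Import FunctionalExtensionality ClassicalEpsilon Classical.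
From mathcomp Require Import ring zify.

Set Implicit Arguments. Unset Strict Implicit. Unset Printing Implicit Defensive.

Section Basics.
Variables (K : fieldType) (n : nat).

Definition E (a : 'X_{1..n}) (v : 'I_n -> K) : der K n :=
  fun f => 'X_[a] * \sum_(j < n) (v j *: ('X_j * mderiv j f)).

Definition pr (v : 'I_n -> K) (m : 'X_{1..n}) : K := \sum_(j < n) v j * (m j)%:R.

Lemma prD v a b : pr v (a + b)%MM = pr v a + pr v b.
Proof.
by rewrite /pr -big_split; apply: eq_bigr => j _; rewrite mnmDE natrD mulrDr.
Qed.

Lemma pr0 v : pr v 0%MM = 0.
Proof. by rewrite /pr big1 // => j _; rewrite mnm0E mulr0. Qed.

Lemma prL c v w m : pr (fun l => c * v l + w l) m = c * pr v m + pr w m.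
Proof.
rewrite /pr mulr_sumr -big_split; apply: eq_bigr => j _.
by rewrite mulrDl mulrA.
Qed.

Lemma E_X a v m : E a v 'X_[m] = pr v m *: 'X_[(a + m)%MM].
Proof.
rewrite /E /pr scaler_suml mulr_sumr; apply: eq_bigr => j _.
rewrite mderivX -!scalerAr !scalerA -scalerA.
have [->|mj] := eqVneq (m j) 0%N; first by rewrite mulr0n mulr0 !scale0r scaler0.
rewrite scalerA; congr (_ *: _); rewrite -!(mpolyXD K); congr ('X_[_]).
apply/mnmP => l; rewrite !mnmDE mnmBE mnm1E.
case: eqP => [<-|_]; last by rewrite add0n subn0.
by rewrite add1n subn1 prednK // lt0n.
Qed.

Lemma E_lin a v c f g : E a v (c *: f + g) = c *: E a v f + E a v g.
Proof.
rewrite /E scalerAr -mulrDr; congr (_ * _).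
rewrite scaler_sumr -big_split; apply: eq_bigr => j _.
by rewrite mderivD mderivZ mulrDr scalerDr -scalerAr !scalerA mulrC.
Qed.

Lemma E0 a v : E a v 0 = 0.
Proof.
have := E_lin a v (-1) 0 0; rewrite scaler0 addr0 => ->.
by rewrite scaleN1r addNr.
Qed.

Lemma E_Z a v c f : E a v (c *: f) = c *: E a v f.
Proof. by rewrite -[c *: f]addr0 E_lin E0 addr0. Qed.

Definition islin (D : der K n) := forall c f g, D (c *: f + g) = c *: D f + D g.

Lemma islin0 D : islin D -> D 0 = 0.
Proof.
move=> HD; have := HD (-1) 0 0; rewrite scaler0 addr0 => ->.
by rewrite scaleN1r addNr.
Qed.

Lemma islin_sum D (I : Type) (r : seq I) (F : I -> {mpoly K[n]}) (c : I -> K) :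
  islin D -> D (\sum_(i <- r) c i *: F i) = \sum_(i <- r) c i *: D (F i).
Proof.
move=> HD; elim: r => [|x r IH]; first by rewrite !big_nil islin0.
by rewrite !big_cons HD IH.
Qed.

Lemma ext_mono D1 D2 : islin D1 -> islin D2 ->
  (forall m, D1 'X_[m] = D2 'X_[m]) -> forall f, D1 f = D2 f.
Proof.
move=> H1 H2 Hm f; rewrite (mpolyE f) !islin_sum //.
by apply: eq_bigr => m _; rewrite Hm.
Qed.

Lemma E_islin a v : islin (E a v).
Proof. by move=> c f g; apply: E_lin. Qed.

Lemma bracket_islin D1 D2 : islin D1 -> islin D2 -> islin (lie_bracket D1 D2).
Proof.
move=> H1 H2 c f g; rewrite /lie_bracket H2 H1 H1 H2.
by rewrite scalerBr addrACA opprD addrA.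
Qed.

Definition brv (a : 'X_{1..n}) v (b : 'X_{1..n}) w : 'I_n -> K :=
  fun l => pr v b * w l - pr w a * v l.

Lemma bracketE a v b w f :
  lie_bracket (E a v) (E b w) f = E (a + b)%MM (brv a v b w) f.
Proof.
apply: ext_mono f; [apply: bracket_islin; apply: E_islin|apply: E_islin|] => m.
rewrite /lie_bracket !E_X !E_Z !E_X !scalerA.
have -> : (b + (a + m) = a + b + m)%MM by rewrite addmA [(b + a)%MM]addmC.
rewrite addmA -scalerBl; congr (_ *: _).
rewrite !prD /brv.
have -> : pr (fun l => pr v b * w l - pr w a * v l) m =
   pr v b * pr w m + (- pr w a) * pr v m.
  by rewrite /pr !mulr_sumr -big_split; apply: eq_bigr => j _ /=; ring.
ring.
Qed.

End Basics.


Section Forward.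
Variables (K : fieldType) (HK : [pchar K] =i pred0) (n k : nat) (D : 'I_k -> der K n).

Implicit Types (a b : 'X_{1..n}) (v w : 'I_n -> K).

Lemma natK_eq0 (m : nat) : (m%:R == 0 :> K) = (m == 0%N).
Proof. exact: (pcharf0P K).1 HK m. Qed.

Lemma natK_inj (m1 m2 : nat) : (m1%:R = m2%:R :> K) -> m1 = m2.
Proof.
wlog le12 : m1 m2 / (m1 <= m2)%N.
  by move=> H; case: (leqP m1 m2) => [/H//|/ltnW h /esym /(H _ _ h)].
move=> e; rewrite -(subnKC le12) in e *; rewrite natrD -{1}[m1%:R]addr0 in e.
by move/addrI: e => /esym/eqP; rewrite natK_eq0 => /eqP ->; rewrite addn0.
Qed.

Notation L := (lie_gen D).

Lemma lie_gen_ext d d' : L d -> (forall f, d f = d' f) -> L d'.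
Proof. by move=> Hd e; have <- : d = d' by apply: functional_extensionality. Qed.

Lemma L_bracket a v b w : L (E a v) -> L (E b w) -> L (E (a + b)%MM (brv a v b w)).
Proof. by move=> H1 H2; apply: lie_gen_ext (lg_bracket H1 H2) _ => f; rewrite bracketE. Qed.

Lemma E_scalev a c v f : c *: E a v f = E a (fun l => c * v l) f.
Proof.
rewrite /E scalerAr scaler_sumr; congr (_ * _); apply: eq_bigr => j _.
by rewrite scalerA.
Qed.

Lemma L_scale a v c : L (E a v) -> L (E a (fun l => c * v l)).
Proof. by move=> H; apply: lie_gen_ext (lg_scale c H) _ => f; rewrite E_scalev. Qed.

Lemma L_eqv a v w : L (E a v) -> (forall l, v l = w l) -> L (E a w).
Proof.
move=> H e; have -> : w = v by apply: functional_extensionality => l; rewrite e.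
exact: H.
Qed.

Lemma pr1U (v : 'I_n -> K) l : pr v U_(l)%MM = v l.
Proof.
rewrite /pr (bigD1 l) //= mnm1E eqxx mulr1 big1 ?addr0 // => j /negbTE jl.
by rewrite mnm1E eq_sym jl mulr0.
Qed.

Lemma prMn (v : 'I_n -> K) a t : pr v (a *+ t)%MM = t%:R * pr v a.
Proof.
rewrite /pr mulr_sumr; apply: eq_bigr => j _.
rewrite mulmnE natrM; ring.
Qed.

Lemma prZ (v : 'I_n -> K) c m : pr (fun l => c * v l) m = c * pr v m.
Proof. by rewrite /pr mulr_sumr; apply: eq_bigr => j _; rewrite mulrA. Qed.

Lemma unbounded_not_fin :
  (forall N, exists a v, L (E a v) /\ (exists l, v l != 0) /\ (N <= mdeg a)%N) ->
  ~ fin_dim L.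
Proof.
move=> Hunb [s Hs].
pose d0 : der K n := fun _ => 0.
pose B := (\max_(l < n) \max_(i < size s) msize (nth d0 s i 'X_l))%N.
have [a [v [La [[l0 vl0] leB]]]] := Hunb B.
have [c Hc] := Hs _ La.
have := Hc 'X_l0; rewrite E_X pr1U => e.
have h1 : (mdeg a < msize (v l0 *: 'X_[(a + U_(l0))%MM] : {mpoly K[n]}))%N.
  rewrite msizeZ // msizeX mdegD mdeg1 addn1; exact: ltnW.
have h2 : (msize (\sum_(i < size s) c i *: nth d0 s i 'X_l0) <= B)%N.
  apply: (big_ind (fun x : {mpoly K[n]} => msize x <= B)%N).
  - by rewrite msize0.
  - by move=> x y hx hy; apply: leq_trans (msizeD_le _ _) _; rewrite geq_max hx hy.
  move=> i _; apply: leq_trans (msizeZ_le _ _) _.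
  apply: leq_trans _ (leq_bigmax_cond l0 isT).
  exact: (leq_bigmax_cond i isT).
move: h1; rewrite e => h1; have := leq_trans h1 h2; by rewrite ltnNge leB.
Qed.

Lemma pr_ext v w m : (forall l, v l = w l) -> pr v m = pr w m.
Proof. by move=> e; apply: eq_bigr => j _; rewrite e. Qed.

Fixpoint gam a v b w (m : nat) : 'I_n -> K :=
  if m is m'.+1 then brv a v (b + a *+ m')%MM (gam a v b w m') else w.

Lemma posS a b m : (a + (b + a *+ m) = b + a *+ m.+1)%MM.
Proof. by apply/mnmP => i; rewrite !mnmDE !mulmnE mulnS; lia. Qed.

Lemma L_chain a v b w m : L (E a v) -> L (E b w) -> L (E (b + a *+ m)%MM (gam a v b w m)).
Proof.
move=> La Lb; elim: m => [|m IH] /=.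
  by apply: lie_gen_ext Lb _ => f; congr (E _ _ f); apply/mnmP => i; rewrite mnmDE mulmnE muln0 addn0.
by have := L_bracket La IH; rewrite posS.
Qed.

Lemma chain_inf a v b w : L (E a v) -> L (E b w) -> (0 < mdeg a)%N ->
  (forall m, exists l, gam a v b w m l != 0) -> ~ fin_dim L.
Proof.
move=> La Lb ha Hg; apply: unbounded_not_fin => N.
exists (b + a *+ N)%MM, (gam a v b w N); split; first exact: L_chain.
split; first exact: Hg.
rewrite mdegD mdegMn; apply: leq_trans (leq_addl _ _); exact: leq_pmull.
Qed.

Lemma chain_indep a v b w : fin_dim L -> L (E a v) -> L (E b w) -> (0 < mdeg a)%N ->
  ~ proportional w v -> exists t, pr v (b + a *+ t)%MM = 0.
Proof.
move=> Hfin La Lb ha Hnp; apply: NNPP => Hno.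
have Hnz t : pr v (b + a *+ t)%MM != 0.
  by apply/eqP => e; apply: Hno; exists t.
apply: (chain_inf La Lb ha) Hfin => m.
have [d Hd] : exists d, forall l, gam a v b w m l =
    (\prod_(t < m) pr v (b + a *+ t)%MM) * w l + d * v l.
  elim: m => [|m [d IH]] /=.
    by exists 0 => l; rewrite big_ord0 mul1r mul0r addr0.
  exists (pr v (b + a *+ m)%MM * d - pr (gam a v b w m) a) => l.
  rewrite /brv IH big_ord_recr /=; ring.
have cm0 : \prod_(t < m) pr v (b + a *+ t)%MM != 0.
  by apply/prodf_neq0 => t _; exact: Hnz.
apply: NNPP => Hall; apply: Hnp.
exists (- d / \prod_(t < m) pr v (b + a *+ t)%MM) => l.
have : gam a v b w m l = 0.
  by apply/eqP; apply: NNPP => h; apply: Hall; exists l; apply/negP.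
rewrite Hd => /eqP; rewrite addr_eq0 => /eqP e.
by rewrite -[w l](mulKf cm0) e; ring.
Qed.

Lemma chain_prop a v b : fin_dim L -> L (E a v) -> L (E b v) -> (0 < mdeg a)%N ->
  (exists l, v l != 0) -> exists t, pr v (b + a *+ t)%MM = pr v a.
Proof.
move=> Hfin La Lb ha [l0 hl0]; apply: NNPP => Hno.
have Hnz t : pr v (b + a *+ t)%MM - pr v a != 0.
  by rewrite subr_eq0; apply/eqP => e; apply: Hno; exists t.
apply: (chain_inf La Lb ha) Hfin => m.
have Hd : forall l, gam a v b v m l =
    (\prod_(t < m) (pr v (b + a *+ t)%MM - pr v a)) * v l.
  elim: m => [|m IH] /=.
    by move=> l; rewrite big_ord0 mul1r.
  move=> l; rewrite /brv IH big_ord_recr /= (pr_ext _ IH) prZ; ring.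
exists l0; rewrite Hd mulf_neq0 //.
by apply/prodf_neq0 => t _; exact: Hnz.
Qed.

Lemma nat_t1 (t t' : nat) : (t + t' = t * t')%N -> (t = 0 /\ t' = 0)%N \/ (t = 2 /\ t' = 2)%N.
Proof.
move=> h; case: t h => [|[|[|t]]] h; try lia.
case: t' h => [|[|[|t']]] h; nia.
Qed.

Lemma nat_t2 (r r' t t' : nat) : (0 < r)%N -> (0 < r')%N ->
  (r*r' + r' + t*r' = t*r)%N -> (t'*r' = r + r*r' + t'*r)%N -> False.
Proof.
move=> h1 h2 e1 e2.
have : (r' < r)%N by nia.
have : (r < r')%N by nia.
lia.
Qed.

Lemma prop_sym v w : (exists l, v l != 0) -> proportional v w -> proportional w v.
Proof.
move=> [l0 h0] [c Hc]; have c0 : c != 0.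
  by apply: contraNneq h0 => c0; rewrite Hc c0 mul0r.
by exists c^-1 => l; rewrite Hc mulKf.
Qed.

Lemma prop_refl v : proportional v v.
Proof. by exists 1 => l; rewrite mul1r. Qed.

Lemma pair_prop a v b w : fin_dim L -> L (E a v) -> L (E b w) ->
  (0 < mdeg a)%N -> (0 < mdeg b)%N -> (exists l, v l != 0) -> (exists l, w l != 0) ->
  proportional w v -> pr v a = pr v b.
Proof.
move=> Hfin La Lb ha hb hv [l1 hw1] [c Hc].
have c0 : c != 0 by apply: contraNneq hw1 => c0; rewrite Hc c0 mul0r.
have Lb' : L (E b v).
  apply: L_eqv (L_scale c^-1 Lb) _ => l; by rewrite Hc mulKf.
set F := pr v a; set G := pr v b.
have [t e1] := chain_prop Hfin La Lb' ha hv.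
have [t' e2] := chain_prop Hfin Lb' La hb hv.
rewrite prD prMn -/F -/G in e1; rewrite prD prMn -/F -/G in e2.
apply: NNPP => hFG.
have GF0 : G - F != 0 by rewrite subr_eq0; apply/eqP => e; apply: hFG.
have Lz : L (E (a + b)%MM v).
  apply: L_eqv (L_scale (G - F)^-1 (L_bracket La Lb')) _ => l.
  rewrite /brv -/F -/G -mulrBl mulKf //.
have hab : (0 < mdeg (a + b)%MM)%N by rewrite mdegD ltn_addr.
have [t'' e3] := chain_prop Hfin Lz La hab hv.
rewrite prD prMn prD -/F -/G in e3.
have key : F * ((t + t')%:R - (t * t')%:R) =
   (F + t'%:R * G - G) - (t'%:R - 1) * (G + t%:R * F - F).
  by rewrite natrD natrM; ring.
rewrite e1 e2 !subrr mulr0 subr0 in key.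
move/eqP: key; rewrite mulf_eq0 => /orP [/eqP F0|].
  by apply: hFG; move: e1; rewrite F0 mulr0 addr0 => ->.
rewrite subr_eq0 => /eqP /natK_inj /nat_t1 [[tt tt']|[tt tt']]; subst t t'.
  by apply: hFG; move: e1; rewrite mul0r addr0.
have G' : G = - F by rewrite -[G](addrK (2%:R * F)) e1; ring.
have F0 : F = 0.
  by move: e3; rewrite G' subrr mulr0 addr0.
by apply: hFG; rewrite G' F0 oppr0.
Qed.

Lemma pr_lin2 (x y : K) v w m :
  pr (fun l => x * w l - y * v l) m = x * pr w m - y * pr v m.
Proof. by rewrite /pr !mulr_sumr -sumrB; apply: eq_bigr => j _; ring. Qed.

Lemma pair_nonprop a v b w : fin_dim L -> L (E a v) -> L (E b w) ->
  (0 < mdeg a)%N -> (0 < mdeg b)%N -> (exists l, v l != 0) -> (exists l, w l != 0) ->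
  ~ proportional w v -> pr w a = 0 \/ pr v b = 0.
Proof.
move=> Hfin La Lb ha hb hv hw Hnp.
have Hnp' : ~ proportional v w by move/(prop_sym hv).
apply: NNPP => Hno.
have B0 : pr v b != 0 by apply/eqP => e; apply: Hno; right.
have C0 : pr w a != 0 by apply/eqP => e; apply: Hno; left.
set A := pr v a in B0 C0 *; set B := pr v b in B0 *; set C := pr w a in C0 *; set Dd := pr w b.
have [r e1] := chain_indep Hfin La Lb ha Hnp.
have [r' e2] := chain_indep Hfin Lb La hb Hnp'.
rewrite prD prMn -/A -/B in e1; rewrite prD prMn -/C -/Dd in e2.
have Lz := L_bracket La Lb.
have hab : (0 < mdeg (a + b)%MM)%N by rewrite mdegD ltn_addr.
have [hv0 hv0'] := hv; have [hw0 hw0'] := hw.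
have npz1 : ~ proportional v (brv a v b w).
  move=> [c Hc]; apply: Hnp.
  have c0 : c != 0.
    by apply: contraNneq hv0' => c0; rewrite Hc c0 mul0r.
  exists ((1 + c * C) / (c * B)) => l.
  have := Hc l; rewrite /brv -/B -/C => e.
  apply: (mulfI (mulf_neq0 c0 B0)); rewrite mulrA mulrCA divff ?mulf_neq0 // mulr1.
  have -> : c * B * w l = c * (B * w l - C * v l) + c * C * v l by ring.
  by rewrite -e; ring.
have npz2 : ~ proportional w (brv a v b w).
  move=> [c Hc]; apply: Hnp'.
  have c0 : c != 0.
    by apply: contraNneq hw0' => c0; rewrite Hc c0 mul0r.
  exists ((1 - c * B) / (- (c * C))) => l.
  have := Hc l; rewrite /brv -/B -/C => e.
  have cC : - (c * C) != 0 by rewrite oppr_eq0 mulf_neq0.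
  apply: (mulfI cC); rewrite mulrA mulrCA divff // mulr1.
  have -> : - (c * C) * v l = c * (B * w l - C * v l) - c * B * w l by ring.
  by rewrite -e; ring.
have [t e3] := chain_indep Hfin Lz La hab npz1.
have [t' e4] := chain_indep Hfin Lz Lb hab npz2.
rewrite prD prMn prD /brv !pr_lin2 -/A -/B -/C -/Dd in e3.
rewrite prD prMn prD /brv !pr_lin2 -/A -/B -/C -/Dd in e4.
have r0 : (0 < r)%N.
  by rewrite lt0n; apply: contra B0 => /eqP rr; rewrite -e1 rr mul0r addr0.
have r'0 : (0 < r')%N.
  by rewrite lt0n; apply: contra C0 => /eqP rr; rewrite -e2 rr mul0r addr0.
have BC0 : B * C != 0 by rewrite mulf_neq0.
have X0 : (r * r' + r' + t * r')%:R = (t * r)%:R :> K.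
  apply/eqP; rewrite -subr_eq0; apply/eqP; apply: (mulfI BC0); rewrite mulr0.
  have -> : B * C * ((r * r' + r' + t * r')%:R - (t * r)%:R) =
    r%:R * r'%:R * ((B * C - C * A) + t%:R * ((B * C - C * A) + (B * Dd - C * B)))
    + r'%:R * C * (1 + t%:R) * (B + r%:R * A) - t%:R * r%:R * B * (C + r'%:R * Dd).
    by rewrite !natrD !natrM; ring.
  by rewrite e1 e2 e3; ring.
have Y0 : (t' * r')%:R = (r + r * r' + t' * r)%:R :> K.
  apply/eqP; rewrite -subr_eq0; apply/eqP; apply: (mulfI BC0); rewrite mulr0.
  have -> : B * C * ((t' * r')%:R - (r + r * r' + t' * r)%:R) =
    r%:R * r'%:R * ((B * Dd - C * B) + t'%:R * ((B * C - C * A) + (B * Dd - C * B)))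
    - r%:R * B * (1 + t'%:R) * (C + r'%:R * Dd) + t'%:R * r'%:R * C * (B + r%:R * A).
    by rewrite !natrD !natrM; ring.
  by rewrite e1 e2 e4; ring.
exact: (nat_t2 r0 r'0 (natK_inj X0) (natK_inj Y0)).
Qed.

Definition T := ('X_{1..n} * ('I_n -> K))%type.
Definition PL (x : T) := L (E x.1 x.2) /\ (0 < mdeg x.1)%N /\ (exists l, x.2 l != 0).
Definition M (x y : T) :=
  ~ proportional x.2 y.2 /\ pr y.2 x.1 = 0 /\ pr x.2 y.1 != 0.

Lemma PL_Z x y : PL x -> PL y -> M x y -> PL ((x.1 + y.1)%MM, y.2).
Proof.
move=> [Lx [hx vx]] [Ly [hy vy]] [_ [e1 e2]]; split => /=; last first.
  by split => //; rewrite mdegD ltn_addr.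
apply: L_eqv (L_scale (pr x.2 y.1)^-1 (L_bracket Lx Ly)) _ => l.
by rewrite /brv e1 mul0r subr0 mulKf.
Qed.

Lemma path2 x y u : fin_dim L -> PL x -> PL y -> PL u -> M x y -> M y u ->
  pr u.2 x.1 = 0.
Proof.
move=> Hfin Px Py Pu Mxy Myw.
have [LZ [hZ vZ]] := PL_Z Px Py Mxy.
have [Lw [hw vw]] := Pu.
have np : ~ proportional u.2 y.2 by move=> /(prop_sym vw); apply: Myw.1.
have [h|h] := pair_nonprop Hfin LZ Lw hZ hw vZ vw np.
  by move: h; rewrite /= prD Myw.2.1 addr0.
by move: Myw.2.2; rewrite h eqxx.
Qed.

Fixpoint ppath (x : T) (l : seq T) : Prop :=
  if l is y :: l' then PL y /\ M x y /\ ppath y l' else True.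

Lemma ppath_last x l : PL x -> ppath x l -> PL (last x l).
Proof. by elim: l x => [|y l IH] x //= Px [Py [_ pp]]; apply: IH. Qed.

Lemma no_cycle : fin_dim L -> forall N x l, size l = N -> PL x -> ppath x l ->
  M (last x l) x -> False.
Proof.
move=> Hfin N; elim: N => [|N IH] x [|y l] //=.
- by move=> _ _ _ [np _]; apply: np; apply: prop_refl.
- case: l => [|w l'] /=.
    by move=> _ _ [_ [[_ [e _]] _]] [_ [_ ne]]; move: ne; rewrite e eqxx.
  move=> [sz] Px [Py [Mxy [Pw [Myw pp]]]] Mzx.
  set z := last w l' in Mzx.
  have Pz : PL z by apply: ppath_last.
  have h1 : pr y.2 z.1 = 0 by apply: (path2 Hfin Pz Px Py Mzx Mxy).
  have h2 : pr w.2 x.1 = 0 by apply: (path2 Hfin Px Py Pw Mxy Myw).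
  have PZ := PL_Z Px Py Mxy.
  have MZw : M ((x.1 + y.1)%MM, y.2) w.
    split; first exact: Myw.1.
    by split => /=; [rewrite prD h2 Myw.2.1 addr0 | exact: Myw.2.2].
  have [[c Hc]|np] := classic (proportional z.2 y.2).
    move: Mzx => [_ [_]]; rewrite (pr_ext _ Hc) prZ Mxy.2.1 mulr0 eqxx //.
  have [e|ne] := classic (pr z.2 (x.1 + y.1)%MM = 0).
    apply: (IH y (w :: l')) => //=.
    split => //; split; first exact: h1.
    move: Mzx => [_ [_ ne]]; apply: contra ne => /eqP e'.
    by move: e; rewrite prD e' addr0 => ->.
  apply: (IH ((x.1 + y.1)%MM, y.2) (w :: l')) => //=.
  split => //; split => //=; apply/eqP; exact: ne.
Qed.

End Forward.


Section Gen.
Variables (K : fieldType) (HK : [pchar K] =i pred0) (n k : nat)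
  (p : 'I_k -> 'I_n -> nat) (beta : 'I_k -> 'I_n -> K).

Definition mk (q : 'I_n -> nat) : 'X_{1..n} := [multinom q j | j < n].

Lemma mkE q j : mk q j = q j.
Proof. by rewrite /mk mnmE. Qed.

Lemma pairing_pr (v : 'I_n -> K) q : pairing v (fun l => (q l)%:Z) = pr v (mk q).
Proof. by apply: eq_bigr => j _; rewrite mkE -pmulrn. Qed.

Lemma pairing_diff (v : 'I_n -> K) q1 q2 :
  pairing v (fun l => (q1 l)%:Z - (q2 l)%:Z) = pr v (mk q1) - pr v (mk q2).
Proof.
rewrite /pairing /pr -sumrB; apply: eq_bigr => j _.
by rewrite !mkE intrB -!pmulrn mulrBr.
Qed.

Lemma pairing_comb (v : 'I_n -> K) q1 q2 (t : nat) :
  pairing v (fun l => (q1 l)%:Z + (t * q2 l)%:Z) = pr v (mk q1 + mk q2 *+ t)%MM.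
Proof.
apply: eq_bigr => j _; rewrite mnmDE mulmnE !mkE -PoszD -pmulrn.
by rewrite [(q2 j * t)%N]mulnC.
Qed.

Definition Dg := fun i => Delta (p i) (beta i).
Notation L := (lie_gen Dg).
Definition X (i : 'I_k) : T K n := (mk (p i), beta i).

Hypothesis Hbeta : forall i, exists l, beta i l != 0.
Hypothesis Hp : forall i, exists l, p i l != 0%N.

Lemma PL_X i : PL Dg (X i).
Proof.
split; first exact: (lg_base Dg i).
split; last exact: Hbeta.
have [l hl] := Hp i; rewrite mdegE (bigD1 l) //= mkE.
by apply: leq_trans (leq_addr _ _); rewrite lt0n.
Qed.

Definition Mb (i j : 'I_k) : bool :=
  if excluded_middle_informative (M (X i) (X j)) then true else false.

Lemma MbP i j : Mb i j -> M (X i) (X j).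
Proof. by rewrite /Mb; case: excluded_middle_informative. Qed.

Lemma MPb i j : M (X i) (X j) -> Mb i j.
Proof. by rewrite /Mb; case: excluded_middle_informative. Qed.

Hypothesis Hfin : fin_dim L.

Lemma path_ppath i q : path Mb i q -> ppath Dg (X i) (map X q).
Proof.
elim: q i => [|j q IH] i //= /andP [hij hq]; split; first exact: PL_X.
by split; [exact: MbP | exact: IH].
Qed.

Definition rk (i : 'I_k) := #|[set x | connect Mb x i]|.

Lemma rk_lt i j : M (X i) (X j) -> (rk i < rk j)%N.
Proof.
move=> Mij; apply: proper_card; apply/properP; split.
  apply/subsetP => x; rewrite !inE => hx.
  by apply: connect_trans hx (connect1 (MPb Mij)).
exists j; first by rewrite inE connect0.
rewrite inE; apply/negP => /connectP [q pq eq].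
apply: (no_cycle HK Hfin erefl (PL_X j) (path_ppath pq)).
by rewrite last_map -eq.
Qed.

Definition srt := sort (fun x y => rk x <= rk y)%N (enum 'I_k).

Lemma size_srt : size srt = k.
Proof. by rewrite size_sort size_enum_ord. Qed.

Lemma uniq_srt : uniq srt.
Proof. by rewrite sort_uniq enum_uniq. Qed.

Definition fs (i : 'I_k) := nth i srt i.

Lemma fs_inj : injective fs.
Proof.
move=> i j; rewrite /fs (set_nth_default i j) ?size_srt // => e.
apply/val_inj/eqP; rewrite -(nth_uniq i _ _ uniq_srt) ?size_srt //.
- by rewrite e.
- exact: ltn_ord.
- exact: ltn_ord.
Qed.

Definition sp : {perm 'I_k} := perm fs_inj.

Lemma sp_mono (i j : 'I_k) : (i <= j)%N -> (rk (sp i) <= rk (sp j))%N.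
Proof.
move=> lij; rewrite !permE /fs (set_nth_default i j) ?size_srt //.
have hs : sorted (fun x y => rk x <= rk y)%N srt.
  by apply: sort_sorted => x y; exact: leq_total.
have tr : transitive (fun x y => rk x <= rk y)%N.
  by move=> x y z; apply: leq_trans.
have rf : reflexive (fun x y => rk x <= rk y)%N by move=> x.
by apply: (sorted_leq_nth tr rf i hs) => //; rewrite inE size_srt.
Qed.

Lemma forward :
  exists s : {perm 'I_k},
    (forall i j : 'I_k, proportional (beta (s i)) (beta (s j)) ->
       pairing (beta (s i)) (fun l => (p (s i) l)%:Z - (p (s j) l)%:Z) = 0) /\
    (forall i j : 'I_k, ~ proportional (beta (s i)) (beta (s j)) -> (i < j)%N ->
       pairing (beta (s j)) (fun l => (p (s i) l)%:Z) = 0 /\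
       exists r : nat,
         pairing (beta (s i)) (fun l => (p (s j) l)%:Z + (r * p (s i) l)%:Z) = 0).
Proof.
exists sp; split.
  move=> i j hprop; rewrite pairing_diff; apply/eqP; rewrite subr_eq0; apply/eqP.
  have [Li [hi vi]] := PL_X (sp i); have [Lj [hj vj]] := PL_X (sp j).
  apply: (pair_prop HK Hfin Li Lj hi hj vi vj).
  exact: prop_sym hprop.
move=> i j hnp lij.
have [Li [hi vi]] := PL_X (sp i); have [Lj [hj vj]] := PL_X (sp j).
have np : ~ proportional (beta (sp j)) (beta (sp i)) by move/(prop_sym vj).
split.
  rewrite pairing_pr; apply: NNPP => ne.
  have [h|h] := pair_nonprop HK Hfin Li Lj hi hj vi vj np; first by apply: ne.
  have Mji : M (X (sp j)) (X (sp i)).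
    split; first exact: np.
    by split; [exact: h | apply/eqP].
  have := rk_lt Mji; rewrite ltnNge sp_mono //; exact: ltnW.
have [t ht] := chain_indep Hfin Li Lj hi np.
by exists t; rewrite pairing_comb.
Qed.

End Gen.


Section Backward.
Variables (K : fieldType) (HK : [pchar K] =i pred0) (n k : nat)
  (a : 'I_k -> 'X_{1..n}) (b : 'I_k -> 'I_n -> K) (r : 'I_k -> 'I_k -> nat).

Implicit Types (i j l X Y : 'I_k).

Definition P i j := proportional (b i) (b j).
Definition lam i := pr (b i) (a i).

Hypothesis Hb : forall i, exists z, b i z != 0.
Hypothesis HP1 : forall i j, P i j -> pr (b i) (a i) = pr (b i) (a j).
Hypothesis HP2a : forall i j : 'I_k, ~ P i j -> (i < j)%N -> pr (b j) (a i) = 0.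
Hypothesis HP2b : forall i j : 'I_k, ~ P i j -> (i < j)%N ->
  pr (b i) (a j) + (r i j)%:R * lam i = 0.

Lemma P_refl i : P i i.
Proof. exact: prop_refl. Qed.

Lemma P_sym i j : P i j -> P j i.
Proof. exact: prop_sym. Qed.

Lemma P_trans i j l : P i j -> P j l -> P i l.
Proof.
move=> [c1 h1] [c2 h2]; exists (c1 * c2) => x; by rewrite h1 h2 mulrA.
Qed.

Lemma P_pr i j m : P i j -> exists c, pr (b i) m = c * pr (b j) m.
Proof. by move=> [c h]; exists c; rewrite (pr_ext _ h) prZ. Qed.

Lemma P_pr0 i j m : P i j -> pr (b j) m = 0 -> pr (b i) m = 0.
Proof. by move=> /(P_pr m) [c ->] ->; rewrite mulr0. Qed.

Definition A (j l : 'I_k) := (l < j)%N /\ forall j' : 'I_k, (j <= j')%N -> ~ P l j'.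

Lemma G2 X i Y : (i < Y)%N -> P X Y -> ~ P i Y -> pr (b X) (a i) = 0.
Proof. by move=> lt pXY np; apply: (P_pr0 pXY); apply: HP2a. Qed.

Lemma G1 (i : 'I_k) (m : 'I_k -> nat) X Y :
  (forall l, m l <> 0%N -> A i l) -> (i <= Y)%N -> P X Y ->
  \sum_l (m l)%:R * pr (b X) (a l) = 0.
Proof.
move=> Hm iY pXY; apply: big1 => l _.
have [->|ml] := eqVneq (m l) 0%N; first by rewrite mul0r.
have [li Hl] : A i l by apply: Hm; apply/eqP.
rewrite (P_pr0 pXY) ?mulr0 //.
apply: HP2a; first exact: Hl.
exact: leq_trans li iY.
Qed.

Lemma pr_mult i l : exists c, pr (b i) (a l) = c * lam i.
Proof.
have [pli|npli] := classic (P l i).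
  by exists 1; rewrite mul1r /lam (HP1 (P_sym pli)).
case: (ltngtP l i) => [lt|gt|eq].
- by exists 0; rewrite mul0r; apply: HP2a.
- exists (- (r i l)%:R); apply/eqP; rewrite mulNr -addr_eq0; apply/eqP.
  apply: HP2b => // pil; apply: npli; exact: P_sym.
- by exfalso; apply: npli; rewrite (val_inj eq); apply: P_refl.
Qed.

Definition Occ (x : T K n) (j : 'I_k) :=
  exists c (m : 'I_k -> nat),
    (forall z, x.2 z = c * b j z) /\
    (forall v : 'I_n -> K, pr v x.1 = pr v (a j) + \sum_l (m l)%:R * pr v (a l)) /\
    mdeg x.1 = (mdeg (a j) + \sum_l m l * mdeg (a l))%N /\
    (forall l, m l <> 0%N -> A j l /\ lam l != 0) /\
    (forall l, A j l -> exists t : nat, pr (b l) x.1 + t%:R * lam l = 0).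

Definition Inv (x : T K n) := (forall z, x.2 z = 0) \/ exists j, Occ x j.

Lemma pr_zero (v : 'I_n -> K) m : (forall z, v z = 0) -> pr v m = 0.
Proof. by move=> h; apply: big1 => z _; rewrite h mul0r. Qed.

Lemma notA_ex i l : ~ A i l -> exists Y, (i <= Y)%N /\ P l Y.
Proof.
move=> nA; case: (ltnP l i) => li; last by exists l; split => //; apply: P_refl.
apply: NNPP => hno; apply: nA; split => // j' ij' plj'.
by apply: hno; exists j'.
Qed.

Lemma A_trans i j l : (i < j)%N -> A i l -> A j l.
Proof.
move=> ij [li h]; split; first exact: ltn_trans li ij.
by move=> j' jj'; apply: h; apply: leq_trans (ltnW ij) jj'.
Qed.

Lemma Inv_gen i : Inv (a i, b i).
Proof.
right; exists i, 1, (fun _ => 0%N); split => /=; first by move=> z; rewrite mul1r.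
split; first by move=> v; rewrite big1 ?addr0 // => l _; rewrite mul0r.
split; first by rewrite big1 ?addn0.
split; first by move=> l /= h; exfalso; apply: h.
move=> l [li h]; exists (r l i); apply: HP2b => //.
by apply: h.
Qed.

Lemma Inv_scale x (c : K) : Inv x -> Inv (x.1, fun z => c * x.2 z).
Proof.
case=> [h|[j [c' [m [hd rest]]]]]; first by left => z /=; rewrite h mulr0.
by right; exists j, (c * c'), m; split => // z /=; rewrite hd mulrA.
Qed.

Lemma Inv_eqv x (w : 'I_n -> K) : Inv x -> (forall z, x.2 z = w z) -> Inv (x.1, w).
Proof.
case=> [h|[j [c' [m [hd rest]]]]] e; first by left => z /=; rewrite -e h.
by right; exists j, c', m; split => // z /=; rewrite -e hd.
Qed.

Lemma close_P x y i j : Occ x i -> Occ y j -> P i j ->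
  Inv ((x.1 + y.1)%MM, brv x.1 x.2 y.1 y.2).
Proof.
move=> [c1 [m1 [hd1 [hpr1 [_ [hs1 _]]]]]] [c2 [m2 [hd2 [hpr2 [_ [hs2 _]]]]]] pij.
have hs1' l : m1 l <> 0%N -> A i l by move=> /hs1 [].
have hs2' l : m2 l <> 0%N -> A j l by move=> /hs2 [].
have ey : pr (b j) y.1 = lam j.
  by rewrite hpr2 (G1 hs2' (leqnn j) (P_refl j)) addr0.
have ex : pr (b j) x.1 = lam j.
  rewrite hpr1 /lam (HP1 (P_sym pij)).
  case: (leqP i j) => ij.
    by rewrite (G1 hs1' ij (P_refl j)) addr0.
  by rewrite (G1 hs1' (leqnn i) (P_sym pij)) addr0.
have [c hc] := pij.
left => z /=; rewrite /brv (pr_ext _ hd1) (pr_ext _ hd2) !prZ (pr_ext _ hc) prZ.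
by rewrite ey ex hd1 hd2 hc; ring.
Qed.

Lemma close_lt x y i j : Occ x i -> Occ y j -> ~ P i j -> (i < j)%N ->
  Inv ((x.1 + y.1)%MM, brv x.1 x.2 y.1 y.2).
Proof.
move=> [c1 [m1 [hd1 [hpr1 [hdeg1 [hs1 ht1]]]]]] [c2 [m2 [hd2 [hpr2 [hdeg2 [hs2 ht2]]]]]] npij ij.
have hs1' l : m1 l <> 0%N -> A i l by move=> /hs1 [].
have hs2' l : m2 l <> 0%N -> A j l by move=> /hs2 [].
have f1 : pr (b j) x.1 = 0.
  by rewrite hpr1 (HP2a npij ij) (G1 hs1' (ltnW ij) (P_refl j)) addr0.
set coef := pr (b i) y.1.
have ebr z : brv x.1 x.2 y.1 y.2 z = c1 * coef * c2 * b j z.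
  rewrite /brv (pr_ext _ hd1) (pr_ext _ hd2) !prZ f1 hd2 /coef; ring.
have [c0|cn0] := eqVneq coef 0.
  by left => z /=; rewrite ebr c0 mulr0 !mul0r.
have [Aji|nAji] := classic (A j i); last first.
  exfalso; move: cn0; apply/negP; rewrite negbK; apply/eqP.
  have [Y [jY piY]] : exists Y, (j <= Y)%N /\ P i Y.
    apply: NNPP => hno; apply: nAji; split => // j' jj' pij'.
    by apply: hno; exists j'.
  have nY : j != Y by apply/eqP => eY; apply: npij; rewrite eY.
  have jY' : (j < Y)%N.
    by rewrite ltn_neqAle jY andbT; apply: contra nY => /eqP e; apply/eqP/val_inj.
  have npjY : ~ P j Y by move=> pjY; apply: npij; apply: P_trans piY (P_sym pjY).
  by rewrite /coef hpr2 (G2 jY' piY npjY) (G1 hs2' jY piY) addr0.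
have lami : lam i != 0.
  apply: contra cn0 => /eqP l0; apply/eqP.
  rewrite /coef hpr2; have [c' ->] := pr_mult i j; rewrite l0 mulr0 add0r.
  by apply: big1 => l _; have [c'' ->] := pr_mult i l; rewrite l0 !mulr0.
right; exists j, (c1 * coef * c2), (fun l => (m1 l + m2 l + (l == i))%N).
split; first by move=> z /=; rewrite ebr.
split.
  move=> v /=; rewrite prD hpr1 hpr2.
  under eq_bigr => l _ do rewrite !natrD !mulrDl.
  rewrite !big_split /=.
  have -> : \sum_(l < k) (l == i)%:R * pr v (a l) = pr v (a i).
    rewrite (bigD1 i) //= eqxx mul1r big1 ?addr0 // => l /negbTE ->.
    by rewrite mul0r.
  ring.
split.
  rewrite /= mdegD hdeg1 hdeg2.
  under [in RHS]eq_bigr => l _ do rewrite !mulnDl.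
  rewrite !big_split /=.
  have -> : (\sum_(l < k) (l == i) * mdeg (a l) = mdeg (a i))%N.
    rewrite (bigD1 i) //= eqxx mul1n big1 ?addn0 // => l /negbTE ->.
    by rewrite mul0n.
  lia.
split.
  move=> l; case: (eqVneq l i) => [->|li]; first by split.
  rewrite addn0.
  have [m20|m2n] := eqVneq (m2 l) 0%N; last by move=> _; apply: hs2; apply/eqP.
  rewrite m20 addn0 => /hs1 [Ail ->]; split => //; exact: A_trans ij Ail.
move=> l Ajl.
have [t2 e2] := ht2 l Ajl.
have [Ail|nAil] := classic (A i l).
  have [t1 e1] := ht1 l Ail.
  exists (t1 + t2)%N; rewrite /= prD natrD mulrDl.
  by rewrite addrACA -addrA [pr (b l) y.1 + _]addrC addrA e1 add0r addrC e2.
have [pli|npli] := classic (P l i).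
  have ex : pr (b l) x.1 = lam l.
    by rewrite hpr1 /lam (HP1 pli) (G1 hs1' (leqnn i) pli) addr0.
  case: t2 e2 => [|t2] e2.
    exfalso; move: cn0; apply/negP; rewrite negbK; apply/eqP.
    by apply: (P_pr0 (P_sym pli)); move: e2; rewrite mul0r addr0.
  exists t2; rewrite /= prD ex; move: e2; rewrite -addn1 natrD mulrDl mul1r.
  by move=> e2; rewrite -e2; ring.
have [Y [iY plY]] := notA_ex nAil.
have nY : i != Y by apply/eqP => eY; apply: npli; rewrite eY.
have iY' : (i < Y)%N.
  by rewrite ltn_neqAle iY andbT; apply: contra nY => /eqP e; apply/eqP/val_inj.
have npiY : ~ P i Y by move=> piY; apply: npli; apply: P_trans plY (P_sym piY).
have ex : pr (b l) x.1 = 0 by rewrite hpr1 (G2 iY' plY npiY) (G1 hs1' iY plY) addr0.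
by exists t2; rewrite /= prD ex add0r.
Qed.

Lemma Inv_bracket x y : Inv x -> Inv y -> Inv ((x.1 + y.1)%MM, brv x.1 x.2 y.1 y.2).
Proof.
case=> [hx|[i Ox]].
  by left => z /=; rewrite /brv (pr_zero _ hx) hx; ring.
case=> [hy|[j Oy]].
  by left => z /=; rewrite /brv (pr_zero _ hy) hy; ring.
have [pij|npij] := classic (P i j); first exact: close_P Ox Oy pij.
case: (ltngtP i j) => [ij|ji|eij].
- exact: close_lt Ox Oy npij ij.
- have npji : ~ P j i by move/P_sym.
  have H := Inv_scale (-1) (close_lt Oy Ox npji ji).
  rewrite addmC; apply: (Inv_eqv H) => z /=; rewrite /brv; ring.
- by exfalso; apply: npij; rewrite (val_inj eij); apply: P_refl.
Qed.

Definition Dgen := fun i => E (a i) (b i).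

Definition rep (d : der K n) := exists s : seq (T K n),
  (forall x, List.In x s -> Inv x) /\ forall f, d f = \sum_(x <- s) E x.1 x.2 f.

Lemma E_sum (a0 : 'X_{1..n}) (v : 'I_n -> K) (I : Type) (s : seq I) (F : I -> {mpoly K[n]}) :
  E a0 v (\sum_(i <- s) F i) = \sum_(i <- s) E a0 v (F i).
Proof.
have := islin_sum s F (fun _ => 1) (E_islin a0 v).
by under eq_bigr do rewrite scale1r; under [in RHS]eq_bigr do rewrite scale1r.
Qed.

Lemma In_allpairs (S1 S2 S3 : Type) (f : S1 -> S2 -> S3) s1 s2 z :
  List.In z [seq f x y | x <- s1, y <- s2] ->
  exists x y, List.In x s1 /\ List.In y s2 /\ z = f x y.
Proof.
elim: s1 => [|x s1 IH] //= H.
case: (List.in_app_or _ _ _ H) => H'.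
  have [y [<- hy]] := (List.in_map_iff _ _ _).1 H'.
  by exists x, y; split; [left|].
have [x' [y [h1 [h2 ->]]]] := IH H'.
by exists x', y; split; [right|].
Qed.

Lemma rep_L d : lie_gen Dgen d -> rep d.
Proof.
elim=> {d} [i| |d1 d2 _ [s1 [h1 e1]] _ [s2 [h2 e2]]|c d _ [s [h e]]|d1 d2 _ [s1 [h1 e1]] _ [s2 [h2 e2]]].
- exists [:: (a i, b i)]; split; last by move=> f; rewrite big_seq1.
  by move=> x [<-|[]]; apply: Inv_gen.
- by exists [::]; split => // f; rewrite big_nil.
- exists (s1 ++ s2); split.
    by move=> x H; case: (List.in_app_or _ _ _ H) => H'; [exact: h1 | exact: h2].
  by move=> f; rewrite big_cat e1 e2.
- exists [seq (x.1, fun z => c * x.2 z) | x <- s]; split.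
    move=> x H; have [y [<- hy]] := (List.in_map_iff _ _ _).1 H; exact: Inv_scale (h y hy).
  move=> f; rewrite e big_map scaler_sumr; apply: eq_bigr => x _.
  exact: E_scalev.
- exists [seq ((x.1 + y.1)%MM, brv x.1 x.2 y.1 y.2) | x <- s1, y <- s2]; split.
    move=> z H; have [x [y [hx [hy ->]]]] := In_allpairs H.
    exact: Inv_bracket (h1 x hx) (h2 y hy).
  move=> f; rewrite /lie_bracket big_allpairs_dep /= (e1 (d2 f)) (e2 (d1 f)).
  rewrite (e2 f) (e1 f).
  under [X in X - _]eq_bigr => x _ do rewrite E_sum.
  under [X in _ - X]eq_bigr => y _ do rewrite E_sum.
  rewrite [X in _ - X]exchange_big /= -sumrB; apply: eq_bigr => x _.
  rewrite -sumrB; apply: eq_bigr => y _.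
  by rewrite -bracketE.
Qed.

Definition Pb i j : bool := if excluded_middle_informative (P i j) then true else false.

Lemma PbP i j : reflect (P i j) (Pb i j).
Proof. by rewrite /Pb; case: excluded_middle_informative => h; constructor. Qed.

Lemma pr_term l l' : 
  pr (b l) (a l') = lam l * ((Pb l' l)%:R - ((l < l')%N && ~~ Pb l l')%:R * (r l l')%:R).
Proof.
case: (PbP l' l) => [pl'l|npl'l].
  have pll' : P l l' by apply: P_sym.
  rewrite /lam (HP1 pll'); case: (PbP l l') => [_|h]; last by exfalso; apply: h.
  by rewrite andbF mul0r subr0 mulr1.
have npll' : ~ P l l' by move=> h; apply: npl'l; apply: P_sym.
case: (PbP l l') => [//|_] /=.
case: (ltngtP l l') => [lt|gt|eq] /=.
- have := HP2b npll' lt; rewrite mul1r => /eqP; rewrite addr_eq0 => /eqP ->.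
  by rewrite sub0r mulrN mulrC.
- by rewrite (HP2a npl'l gt) mul0r subr0 mulr0.
- by exfalso; apply: npl'l; rewrite (val_inj eq); apply: P_refl.
Qed.

Definition R0 := (\max_(l < k) \max_(l' < k) r l l')%N.

Lemma r_le l l' : (r l l' <= R0)%N.
Proof.
apply: leq_trans (leq_bigmax_cond l isT).
exact: (leq_bigmax_cond l' isT).
Qed.

Lemma content_ineq (x : T K n) j (m : 'I_k -> nat) :
  (forall v : 'I_n -> K, pr v x.1 = pr v (a j) + \sum_l (m l)%:R * pr v (a l)) ->
  (forall l, m l <> 0%N -> A j l /\ lam l != 0) ->
  (forall l, A j l -> exists t : nat, pr (b l) x.1 + t%:R * lam l = 0) ->
  forall l, m l <> 0%N -> (m l <= R0 + R0 * \sum_(l' : 'I_k | (l < l')%N) m l')%N.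
Proof.
move=> hpr hs ht l ml.
have [Ajl lam0] := hs l ml.
have [t et] := ht l Ajl.
have npl : ~ P l j by apply: Ajl.2.
have ej : pr (b l) (a j) = - ((r l j)%:R * lam l).
  by apply/eqP; rewrite -addr_eq0; apply/eqP; apply: HP2b => //; exact: Ajl.1.
move: et; rewrite hpr ej.
under eq_bigr => l' _ do rewrite (pr_term l l').
set S1 := (\sum_(l' < k) (Pb l' l) * m l')%N.
set S2 := (\sum_(l' < k) ((l < l')%N && ~~ Pb l l') * (r l l' * m l'))%N.
have eS : \sum_(l' < k) (m l')%:R * (lam l * ((Pb l' l)%:R -
      ((l < l')%N && ~~ Pb l l')%:R * (r l l')%:R)) = lam l * (S1%:R - S2%:R).
  rewrite /S1 /S2 !natr_sum -sumrB mulr_sumr; apply: eq_bigr => l' _.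
  rewrite !natrM; ring.
rewrite eS => e.
have e' : lam l * ((t + S1)%:R - (r l j + S2)%:R) = 0.
  by rewrite -e !natrD; ring.
move/eqP: e'; rewrite mulf_eq0 (negbTE lam0) /= subr_eq0 => /eqP /(natK_inj HK) e2.
have h1 : (m l <= S1)%N.
  rewrite /S1 (bigD1 l) //=; case: (PbP l l) => [_|h]; last by exfalso; apply: h; apply: P_refl.
  by rewrite mul1n leq_addr.
have h2 : (S2 <= R0 * \sum_(l' : 'I_k | (l < l')%N) m l')%N.
  rewrite big_distrr /= [X in (_ <= X)%N]big_mkcond /=.
  rewrite /S2; apply: leq_sum => l' _.
  case: (l < l')%N => //=; case: (Pb l l') => //=; rewrite ?mul0n // mul1n.
  by rewrite leq_mul2r r_le orbT.
apply: leq_trans h1 _; apply: leq_trans (leq_addl t _) _; rewrite e2.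
by apply: leq_add => //; apply: r_le.
Qed.

Fixpoint Fb (d : nat) (l : 'I_k) : nat :=
  if d is d'.+1 then (R0 + R0 * \sum_(l' : 'I_k | (l < l')%N) Fb d' l')%N else 0%N.

Lemma content_bound (m : 'I_k -> nat) :
  (forall l, m l <> 0%N -> (m l <= R0 + R0 * \sum_(l' : 'I_k | (l < l')%N) m l')%N) ->
  forall d l, (k - l <= d)%N -> (m l <= Fb d l)%N.
Proof.
move=> Hm; elim=> [|d IH] l hd.
  by exfalso; move: hd; rewrite leqn0 subn_eq0 leqNgt ltn_ord.
have [->|ml] := eqVneq (m l) 0%N; first by [].
apply: leq_trans (Hm l (elimN eqP ml)) _ => /=.
rewrite leq_add2l leq_mul2l; apply/orP; right.
apply: leq_sum => l' ll'; apply: IH.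
by move: hd ll'; have := ltn_ord l'; lia.
Qed.

Definition Mx := (\max_(l < k) Fb k l)%N.
Definition Da := (\max_(l < k) mdeg (a l))%N.
Definition Bnd := (Da + \sum_(l < k) Mx * Da)%N.

Lemma Occ_deg x j : Occ x j -> (mdeg x.1 <= Bnd)%N.
Proof.
move=> [c [m [_ [hpr [hdeg [hs ht]]]]]].
have Hm := content_ineq hpr hs ht.
have hb l : (m l <= Mx)%N.
  apply: leq_trans (content_bound Hm (leq_subr _ _)) _.
  exact: (leq_bigmax_cond l isT).
have hd l : (mdeg (a l) <= Da)%N by exact: (leq_bigmax_cond l isT).
rewrite hdeg /Bnd leq_add // leq_sum // => l _.
exact: leq_mul.
Qed.

Definition delta (l : 'I_n) : 'I_n -> K := fun z => (z == l)%:R.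

Lemma E_decomp (a0 : 'X_{1..n}) (v : 'I_n -> K) f :
  E a0 v f = \sum_(l < n) v l *: E a0 (delta l) f.
Proof.
rewrite /E.
under [RHS]eq_bigr => l _ do rewrite scalerAr scaler_sumr.
rewrite -mulr_sumr exchange_big /=; congr (_ * _); apply: eq_bigr => j _.
rewrite (bigD1 j) //= big1 ?addr0; first by rewrite /delta eqxx scale1r.
by move=> l /negbTE lj; rewrite /delta eq_sym lj scale0r scaler0.
Qed.

Local Notation U := ('X_{1..n < Bnd.+1} * 'I_n)%type.
Definition Fsp (u : U) : der K n := E (u.1 : 'X_{1..n}) (delta u.2).
Definition sl := map Fsp (enum {: U}).
Definition d0 : der K n := fun _ => 0.

Definition spanned (g : der K n) := exists c : 'I_(size sl) -> K,
  forall f, g f = \sum_(i < size sl) c i *: nth d0 sl i f.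

Lemma spanned_ext g g' : spanned g -> (forall f, g f = g' f) -> spanned g'.
Proof. by move=> [c hc] e; exists c => f; rewrite -e hc. Qed.

Lemma spanned_zero : spanned (fun _ => 0).
Proof. by exists (fun _ => 0) => f; rewrite big1 // => ii _; rewrite scale0r. Qed.

Lemma spanned_add g1 g2 : spanned g1 -> spanned g2 -> spanned (fun f => g1 f + g2 f).
Proof.
move=> [c1 h1] [c2 h2]; exists (fun (ii : 'I_(size sl)) => c1 ii + c2 ii) => f.
by rewrite h1 h2 -big_split; apply: eq_bigr => ii _; rewrite scalerDl.
Qed.

Lemma spanned_scale g (c : K) : spanned g -> spanned (fun f => c *: g f).
Proof.
move=> [c1 h1]; exists (fun (ii : 'I_(size sl)) => c * c1 ii) => f.
by rewrite h1 scaler_sumr; apply: eq_bigr => ii _; rewrite scalerA.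
Qed.

Lemma spanned_Fsp u : spanned (Fsp u).
Proof.
have uin : u \in enum {: U} by rewrite mem_enum.
have i0lt : (index u (enum {: U}) < size sl)%N by rewrite size_map index_mem.
exists (fun (ii : 'I_(size sl)) => ((ii : nat) == index u (enum {: U}))%:R) => f.
rewrite (bigD1 (Ordinal i0lt)) //= eqxx scale1r big1 ?addr0.
  by rewrite /sl (nth_map u) ?index_mem // nth_index.
by move=> ii /negbTE ni; rewrite -val_eqE /= in ni; rewrite ni scale0r.
Qed.

Lemma spanned_sum (I : Type) (s : seq I) (G : I -> der K n) :
  (forall x, List.In x s -> spanned (G x)) -> spanned (fun f => \sum_(x <- s) G x f).
Proof.
elim: s => [|x s IH] H.
  by apply: spanned_ext spanned_zero _ => f; rewrite big_nil.
apply: spanned_ext (spanned_add (H x (or_introl erefl)) (IH (fun y hy => H y (or_intror hy)))) _.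
by move=> f; rewrite big_cons.
Qed.

Lemma spanned_E x : Inv x -> spanned (E x.1 x.2).
Proof.
case=> [h|[j Oj]].
  apply: spanned_ext spanned_zero _ => f; rewrite /E big1 ?mulr0 // => l _.
  by rewrite h scale0r.
have hd := Occ_deg Oj.
have hlt : (mdeg x.1 < Bnd.+1)%N by rewrite ltnS.
pose bm : 'X_{1..n < Bnd.+1} := BMultinom hlt.
have H := @spanned_sum 'I_n (index_enum 'I_n) (fun z : 'I_n => fun f => x.2 z *: Fsp (bm, z) f)
  (fun z _ => spanned_scale (x.2 z) (spanned_Fsp (bm, z))).
by apply: spanned_ext H _ => f; rewrite [RHS]E_decomp.
Qed.

Lemma backward_fin : fin_dim (lie_gen Dgen).
Proof.
exists sl => d Ld.
have [s [hs es]] := rep_L Ld.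
have H := @spanned_sum (T K n) s (fun x : T K n => E x.1 x.2) (fun x hx => spanned_E (hs x hx)).
have [c hc] : spanned d by apply: spanned_ext H _ => f; rewrite es.
by exists c.
Qed.

End Backward.

Lemma fin_dim_mono (K : fieldType) (n : nat) (S1 S2 : der K n -> Prop) :
  (forall d, S1 d -> S2 d) -> fin_dim S2 -> fin_dim S1.
Proof. by move=> H [s hs]; exists s => d /H /hs. Qed.

Lemma lie_gen_perm (K : fieldType) (n k : nat) (D : 'I_k -> der K n) (s : {perm 'I_k}) d :
  lie_gen D d -> lie_gen (fun i => D (s i)) d.
Proof.
elim=> {d} [i| |d1 d2 _ h1 _ h2|c d _ h|d1 d2 _ h1 _ h2].
- have -> : D i = (fun j => D (s j)) (s^-1 i)%g by rewrite /= permKV.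
  exact: lg_base.
- exact: lg_zero.
- exact: lg_add.
- exact: lg_scale.
- exact: lg_bracket.
Qed.

Unset Implicit Arguments.
Set Strict Implicit.

Theorem theorem2 (K : fieldType) (HK : [pchar K] =i pred0) (n k : nat)
  (p : 'I_k -> 'I_n -> nat) (beta : 'I_k -> 'I_n -> K)
  (Hbeta : forall i, exists l, beta i l != 0)
  (Hp : forall i, exists l, p i l != 0%N) :
  fin_dim (lie_gen (fun i => Delta (p i) (beta i)))
  <->
  exists s : {perm 'I_k},
    (forall i j : 'I_k, proportional (beta (s i)) (beta (s j)) ->
       pairing (beta (s i)) (fun l => (p (s i) l)%:Z - (p (s j) l)%:Z) = 0) /\
    (forall i j : 'I_k, ~ proportional (beta (s i)) (beta (s j)) -> (i < j)%N ->
       pairing (beta (s j)) (fun l => (p (s i) l)%:Z) = 0 /\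
       exists r : nat,
         pairing (beta (s i)) (fun l => (p (s j) l)%:Z + (r * p (s i) l)%:Z) = 0).
Proof.
split; first by move=> Hfin; exact: (forward HK Hbeta Hp Hfin).
move=> [s [H1 H2]].
pose q i := p (s i); pose bb i := beta (s i).
pose a i := mk (q i).
have Hr : exists r : 'I_k -> 'I_k -> nat, forall i j,
    ~ proportional (bb i) (bb j) -> (i < j)%N ->
    pr (bb i) (a j) + (r i j)%:R * lam a bb i = 0.
  pose Q (ij : 'I_k * 'I_k) (rr : nat) := ~ proportional (bb ij.1) (bb ij.2) -> (ij.1 < ij.2)%N ->
      pr (bb ij.1) (a ij.2) + rr%:R * lam a bb ij.1 = 0.
  have hex : forall ij, exists rr, Q ij rr.
    move=> [i j]; rewrite /Q /=.
    have [h|h] := classic (~ proportional (bb i) (bb j) /\ (i < j)%N); last first.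
      by exists 0%N => h1 h2; exfalso; apply: h.
    have [_ [rr hrr]] := H2 i j h.1 h.2.
    exists rr => _ _; move: hrr; rewrite pairing_comb /lam prD prMn.
    by rewrite mulrC.
  have [f hf] := fin_all_exists hex.
  by exists (fun i j => f (i, j)) => i j; apply: (hf (i, j)).
have [r Hrr] := Hr.
have Hfin := @backward_fin K HK n k a bb r (fun i => Hbeta (s i)) _ _ Hrr.
apply: (@fin_dim_mono K n _ (lie_gen (Dgen a bb))); last first.
  apply: Hfin.
  - move=> i j hp; apply/eqP; rewrite -subr_eq0; apply/eqP.
    by rewrite /a -pairing_diff; apply: H1.
  - by move=> i j hnp hij; rewrite /a -pairing_pr; exact: (H2 i j hnp hij).1.
move=> d Ld; exact: (@lie_gen_perm K n k _ s d Ld).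
Qed.
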